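(* Let $G$ be an abelian group that is torsion-free or cyclic of prime order. Let $M$ be a matroid over $G$ and $N$ a sparse paving matroid over $G$, both of the same rank $n$, such that $|E(M)|<|E(N)|-1$. If $0\notin E(N)$, then $M$ is matched to $N$.
   Context: A matroid over $G$ is a matroid $M$ whose finite ground set $E(M)$ is a subset of $G$; all matroids are assumed loopless. A matroid of rank $n$ is paving if every $(n-1)$-element subset of its ground set is independent; it is sparse paving if both it and its dual matroid are paving. For matroids $M,N$ over $G$ with $r(M)=r(N)=n>0$ and bases $\mathcal{M}=\{a_1,\dots,a_n\}$ of $M$ and $\mathcal{N}=\{b_1,\dots,b_n\}$ of $N$, $\mathcal{M}$ is matched to $\mathcal{N}$ if there is a permutation $\pi\in S_n$ with $a_i+b_{\pi(i)}\notin E(M)$ for all $i$. $M$ is matched to $N$ if for every basis $\mathcal{M}$ of $M$ there exists a basis $\mathcal{N}$ of $N$ such that $\mathcal{M}$ is matched to $\mathcal{N}$. *)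

(* Defs.v *)
From HB Require Import structures.
From mathcomp Require Import all_boot all_order all_algebra.
From mathcomp Require Import finmap.
Set Implicit Arguments. Unset Strict Implicit. Unset Printing Implicit Defensive.
Import GRing.Theory.
Local Open Scope fset_scope.
Local Open Scope ring_scope.

Definition torsion_free (G : zmodType) : Prop :=
  forall (x : G) (k : nat), (0 < k)%N -> x *+ k = 0 -> x = 0.

Definition cyclic_prime_order (G : zmodType) : Prop :=
  exists (p : nat) (g : G), prime p /\ g != 0 /\ g *+ p = 0 /\
    forall x : G, exists k : nat, x = g *+ k.

Record matroid (G : choiceType) := Matroid {
  ground : {fset G};
  indep : {fset G} -> Prop;
  indep_sub : forall I, indep I -> I `<=` ground;
  indep0 : indep fset0;
  indep_hered : forall I J, J `<=` I -> indep I -> indep J;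
  indep_aug : forall I J, indep I -> indep J -> (#|` I| < #|` J|)%N ->
    exists x, x \in J `\` I /\ indep (x |` I)
}.

Section MatroidDefs.
Variable G : choiceType.
Implicit Types (M : matroid G) (I B : {fset G}).

Definition loopless M : Prop := forall x, x \in ground M -> indep M [fset x].

Definition basis M B : Prop :=
  indep M B /\ forall x, x \in ground M -> x \notin B -> ~ indep M (x |` B).

Definition has_rank M (n : nat) : Prop := exists B, basis M B /\ #|` B| = n.

(* independent sets of the dual matroid M^* (bases of M^* = complements of bases of M) *)
Definition dual_indep M I : Prop :=
  I `<=` ground M /\ exists B, basis M B /\ [disjoint I & B].

Definition paving M : Prop :=
  forall n, has_rank M n ->
    forall I, I `<=` ground M -> #|` I| = n.-1 -> indep M I.

(* the dual is paving: r(M^* ) = |E| - r(M) *)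
Definition dual_paving M : Prop :=
  forall n, has_rank M n ->
    forall I, I `<=` ground M -> #|` I| = (#|` ground M| - n).-1 -> dual_indep M I.

Definition sparse_paving M : Prop := paving M /\ dual_paving M.

End MatroidDefs.

Section Matched.
Variable G : zmodType.
Implicit Types (M N : matroid G) (A B : {fset G}).

(* basis A of M is matched to basis B of N: a bijection pi : A -> B
   (injective map from A into B, |A| = |B|) with a + pi a \notin E(M). *)
Definition bases_matched M A B : Prop :=
  exists f : G -> G,
    {in A &, injective f} /\ {in A, forall a, f a \in B} /\
    {in A, forall a, a + f a \notin ground M}.

Definition matched M N : Prop :=
  forall A, basis M A -> exists B, basis N B /\ bases_matched M A B.

End Matched.

(* Main.v *)
Require Import Defs.
From HB Require Import structures.
From mathcomp Require Import all_boot all_order all_algebra.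
From mathcomp Require Import finmap zify.
From Stdlib Require Import Classical.
Set Implicit Arguments. Unset Strict Implicit. Unset Printing Implicit Defensive.
Import GRing.Theory.
Local Open Scope fset_scope.
Local Open Scope ring_scope.
Section Hall.
Variables (T U : choiceType) (u0 : U).
Definition nb (S : T -> {fset U}) (X : {fset T}) : {fset U} := \bigcup_(x <- X) S x.
Lemma nbP S X y : reflect (exists2 x, x \in X & y \in S x) (y \in nb S X).
Proof.
apply: (iffP (bigfcupP _ _ _ _)) => [[x /andP[? _] ?]|[x ? ?]]; exists x => //.
by rewrite andbT.
Qed.

Definition hallc (S : T -> {fset U}) (A : {fset T}) := forall X, X `<=` A -> (#|` X| <= #|` nb S X|)%N.
Definition sdr (S : T -> {fset U}) (A : {fset T}) (f : T -> U) :=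
  {in A &, injective f} /\ {in A, forall a, f a \in S a}.

Lemma hall_ind k : forall (S : T -> {fset U}) (A : {fset T}), (#|`A| <= k)%N -> hallc S A -> exists f, sdr S A f.
Proof.
elim: k => [|k IH] S A hA hH.
  have A0 : A = fset0 by apply/eqP; rewrite -cardfs_eq0 -leqn0.
  by exists (fun _ => u0); split => x; rewrite A0 inE.
case: (classic (exists X, [/\ X `<=` A, X != fset0, X != A &
                              (#|` nb S X| <= #|` X|)%N])).
  case=> X0 [sX0 nX0 neX0 cX0].
  have pX0 : X0 `<` A by rewrite fproperEneq neX0.
  have ltX0 := fproper_ltn_card pX0.
  have [f1 [f1i f1S]] : exists f, sdr S X0 f.
    apply: (IH S X0); first lia.
    by move=> X sX; apply: hH; apply: fsubset_trans sX sX0.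
  pose N0 := nb S X0.
  pose S2 := fun x => S x `\` N0.
  pose A2 := A `\` X0.
  have cA2 : #|` A2| = (#|` A| - #|` X0|)%N by rewrite cardfsDS.
  have X0gt : (0 < #|` X0|)%N by rewrite cardfs_gt0.
  have [f2 [f2i f2S]] : exists f, sdr S2 A2 f.
    apply: (IH S2 A2); first lia.
    move=> Y sY.
    have e1 : nb S2 Y = nb S Y `\` N0.
      apply/fsetP=> y; apply/nbP/fsetDP.
        by case=> x xY /fsetDP[yS yN]; split => //; apply/nbP; exists x.
      by case=> /nbP[x xY yS] yN; exists x => //; apply/fsetDP.
    have e2 : nb S (Y `|` X0) = nb S Y `|` N0.
      apply/fsetP=> y; apply/nbP/fsetUP.
        case=> x /fsetUP[xY|xX] yS; [left|right]; apply/nbP; by exists x.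
      by case=> /nbP[x xY yS]; exists x => //; apply/fsetUP; [left|right].
    have dYX : Y `&` X0 = fset0.
      apply/fsetP=> x; rewrite !inE; apply/negbTE/negP => /andP[xY xX].
      by move/fsubsetP: sY => /(_ x xY) /fsetDP[_ /negP].
    have hYX := hH (Y `|` X0).
    rewrite fsubUset sX0 andbT in hYX.
    have sYA : Y `<=` A by apply: fsubset_trans sY (fsubsetDl _ _).
    have := hYX sYA; rewrite e2 e1 cardfsD.
    have := cardfsUI Y X0; rewrite dYX cardfs0.
    have := cardfsUI (nb S Y) N0.
    rewrite /N0 in cX0 *.
    lia.
  exists (fun x => if x \in X0 then f1 x else f2 x); split.
    move=> x y xA yA /=.
    case: ifP => xX; case: ifP => yX.
    - exact: f1i.
    - move=> e; have : f2 y \in S2 y by apply: f2S; rewrite inE yX yA.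
      rewrite -e => /fsetDP[_ /negP]; case; apply/nbP; exists x => //; exact: f1S.
    - move=> e; have : f2 x \in S2 x by apply: f2S; rewrite inE xX xA.
      rewrite e => /fsetDP[_ /negP]; case; apply/nbP; exists y => //; exact: f1S.
    - by apply: f2i; rewrite inE ?xX ?yX ?xA ?yA.
  move=> x xA /=; case: ifP => xX; first exact: f1S.
  have : f2 x \in S2 x by apply: f2S; rewrite inE xX xA.
  by case/fsetDP.
move=> hnc.
have ncrit : forall X, X `<=` A -> X != fset0 -> X != A -> (#|` X| < #|` nb S X|)%N.
  move=> X sX nX neX; rewrite ltnNge; apply/negP => c; apply: hnc; by exists X.
case: (fset_0Vmem A) => [A0|[a aA]].
  by exists (fun _ => u0); split => x; rewrite A0 inE.
have Sa : nb S [fset a] = S a by rewrite /nb big_seq_fset1.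
case: (fset_0Vmem (S a)) => [Sa0|[b bS]].
  have := hH [fset a]; rewrite fsub1set aA Sa Sa0 cardfs1 cardfs0 => /(_ isT).
  by [].
pose S1 := fun x => S x `\ b.
pose A1 := A `\ a.
have cA1 := cardfsD1 a A; rewrite aA in cA1.
have [f1 [f1i f1S]] : exists f, sdr S1 A1 f.
  apply: (IH S1 A1); first by rewrite /A1; lia.
  move=> Y sY.
  case: (fset_0Vmem Y) => [->|[y yY]]; first by rewrite cardfs0.
  have sYA : Y `<=` A by apply: fsubset_trans sY (fsubsetDl _ _).
  have aY : a \notin Y by move: sY; rewrite fsubsetD1 => /andP[].
  have nY : Y != fset0 by apply/fset0Pn; exists y.
  have neY : Y != A by apply/eqP => eYA; move: aY; rewrite eYA aA.
  have lt := ncrit Y sYA nY neY.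
  have e1 : nb S1 Y = nb S Y `\ b.
    apply/fsetP=> z; apply/nbP/fsetD1P.
      by case=> x xY /fsetD1P[zb zS]; split => //; apply/nbP; exists x.
    by case=> zb /nbP[x xY zS]; exists x => //; apply/fsetD1P.
  rewrite e1; have := cardfsD1 b (nb S Y).
  case: (b \in nb S Y) => /=; lia.
exists (fun x => if x == a then b else f1 x); split.
  move=> x y xA yA /=.
  case: eqP => xa; case: eqP => ya.
  - by rewrite xa ya.
  - move=> e; have : f1 y \in S1 y by apply: f1S; apply/fsetD1P; split => //; apply/eqP.
    by rewrite -e => /fsetD1P[/eqP].
  - move=> e; have : f1 x \in S1 x by apply: f1S; apply/fsetD1P; split => //; apply/eqP.
    by rewrite e => /fsetD1P[/eqP].
  - by apply: f1i; apply/fsetD1P; split => //; apply/eqP.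
move=> x xA /=; case: eqP => [->//|xa].
have : f1 x \in S1 x by apply: f1S; apply/fsetD1P; split => //; apply/eqP.
by case/fsetD1P.
Qed.

Lemma hall S A : hallc S A -> exists f, sdr S A f.
Proof. exact: (@hall_ind #|`A|). Qed.
End Hall.
Section CD.
Variable G : zmodType.
Definition sumset (A B : {fset G}) : {fset G} := [fset a + b | a in A, b in B].

Lemma sumsetP (A B : {fset G}) z :
  reflect (exists a b, [/\ a \in A, b \in B & z = a + b]) (z \in sumset A B).
Proof.
apply: (iffP (imfset2P _ _ _ _ _)) => [[a aA [b bB ->]]|[a [b [aA bB ->]]]].
  by exists a, b.
by exists a => //; exists b.
Qed.

Lemma mem_sumset (A B : {fset G}) a b : a \in A -> b \in B -> a + b \in sumset A B.
Proof. by move=> aA bB; apply/sumsetP; exists a, b. Qed.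

Lemma shift_card (A : {fset G}) d : #|` [fset x + d | x in A]| = #|`A|.
Proof. by rewrite card_in_imfset //= => x y _ _ /addIr. Qed.

Lemma iter_add_mulrn (d : G) n : iter n (+%R d) 0 = d *+ n.
Proof. by elim: n => [|n IH] //=; rewrite IH mulrS. Qed.

Lemma inv_shift (A : {fset G}) d :
  (forall x, x \in A -> x + d \in A) -> d *+ #|`A| = 0.
Proof.
move=> hA.
pose A' := [fset x + d | x in A].
have sA : A' `<=` A by apply/fsubsetP=> y /imfsetP[x /= xA ->]; exact: hA.
have eA : A' = A.
  apply/eqP; rewrite eqEfcard sA /= /A' shift_card //.
have := congr1 (fun X : {fset G} => \sum_(x <- X) x) eA => /=.
rewrite /A' big_imfset /=; last by move=> x y _ _ /addIr.
rewrite big_split /= big_const_seq count_predT iter_add_mulrn.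
by move=> h; apply: (addrI _ (etrans h (esym (addr0 _)))).
Qed.

Lemma sumset_ge (A B : {fset G}) b : b \in B -> (#|`A| <= #|` sumset A B|)%N.
Proof.
move=> bB; rewrite -(shift_card A b); apply: fsubset_leq_card.
by apply/fsubsetP=> y /imfsetP[x /= xA ->]; apply: mem_sumset.
Qed.

Lemma ar1 (x y z k : nat) : (x <= y)%N -> z = (1 + y)%N -> (z <= k.+1)%N -> (x <= k)%N.
Proof. lia. Qed.
Lemma ar2 (a' i a be b' b s' s : nat) : (a' + i = a + be)%N -> i = b' -> be = b ->
  (a' + b' <= s' + 1)%N -> (s' <= s)%N -> (a + b <= s + 1)%N.
Proof. lia. Qed.
Lemma ar3 (a s L : nat) : (L < a)%N -> (a <= s)%N -> (s <= L)%N -> False.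
Proof. lia. Qed.

Lemma CD_ind (L : nat)
  (hL : forall (d : G) k, d != 0 -> (0 < k)%N -> d *+ k = 0 -> (L < k)%N) k :
  forall (B A : {fset G}), (#|`B| <= k)%N -> A != fset0 -> B != fset0 ->
  (#|` sumset A B| <= L)%N -> (#|`A| + #|`B| <= #|` sumset A B| + 1)%N.
Proof.
elim: k => [|k IH] B A hB nA nB hS.
  by move: nB; rewrite -cardfs_gt0 => h; exfalso; move: h hB; clear; lia.
case: (fset_0Vmem B) => [B0|[b1 b1B]]; first by move: nB; rewrite B0 eqxx.
have cB : #|` B| = (1 + #|` B `\ b1|)%N by have := cardfsD1 b1 B; rewrite b1B.
case: (fset_0Vmem (B `\ b1)) => [B1|[b2 /fsetD1P[b21 b2B]]].
  rewrite cB B1 cardfs0.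
  by have := sumset_ge A b1B; rewrite addn0 leq_add2r.
case: (classic (exists a0 b0 b', [/\ a0 \in A, b0 \in B, b' \in B &
                                    b' + (a0 - b0) \notin A])).
  case=> a0 [b0 [b' [a0A b0B b'B b'n]]].
  pose e := a0 - b0.
  pose Be := [fset b + e | b in B].
  pose A' := A `|` Be.
  pose B' := [fset b in B | b + e \in A].
  have sB' : B' `<=` B `\ b'.
    apply/fsubsetP=> x; rewrite !inE => /andP[xB xe]; rewrite xB andbT.
    by apply/eqP => xb; move: xe; rewrite xb (negbTE b'n).
  have cB' : (#|` B'| <= #|` B `\ b'|)%N := fsubset_leq_card sB'.
  have cB2 : #|` B| = (1 + #|` B `\ b'|)%N by have := cardfsD1 b' B; rewrite b'B.
  have b0B' : b0 \in B' by rewrite !inE b0B /e addrC subrK a0A.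
  have nB' : B' != fset0 by apply/fset0Pn; exists b0.
  have nA' : A' != fset0.
    by apply/fset0Pn; exists a0; rewrite !inE a0A.
  have sS : sumset A' B' `<=` sumset A B.
    apply/fsubsetP=> z /sumsetP[x [y [xA yB ->]]].
    move: yB; rewrite !inE => /andP[yB ye].
    move: xA => /fsetUP[xA|/imfsetP[b /= bB ->]]; first exact: mem_sumset.
    by rewrite -addrA [e + y]addrC addrC; apply: mem_sumset.
  have cS : (#|` sumset A' B'| <= #|` sumset A B|)%N := fsubset_leq_card sS.
  have eI : A `&` Be = [fset b + e | b in B'].
    apply/fsetP=> x; apply/fsetIP/imfsetP.
      case=> xA /imfsetP[b /= bB xe]; exists b => //=.
      by rewrite !inE bB -xe xA.
    case=> b /=; rewrite !inE => /andP[bB be] ->; split => //.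
    by apply/imfsetP; exists b.
  have cI : #|` A `&` Be| = #|` B'| by rewrite eI shift_card.
  have cU : (#|` A `|` Be| + #|` A `&` Be| = #|` A| + #|` Be|)%N := cardfsUI A Be.
  have cBe : #|` Be| = #|` B| by rewrite shift_card.
  have := IH B' A' (ar1 cB' cB2 hB) nA' nB' (leq_trans cS hS).
  by move/(ar2 cU cI cBe)/(_ cS).
move=> Hn.
have hA : forall a b b', a \in A -> b \in B -> b' \in B -> b' + (a - b) \in A.
  move=> a b b' aA bB b'B; case: (boolP (b' + (a - b) \in A)) => // h.
  by exfalso; apply: Hn; exists a, b, b'.
pose d := b1 - b2.
have d0 : d != 0 by rewrite subr_eq0 eq_sym.
have hd : forall x, x \in A -> x + d \in A.
  by move=> x xA; rewrite /d addrCA; apply: hA.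
have := inv_shift hd => dA.
have Apos : (0 < #|`A|)%N by rewrite cardfs_gt0.
have := hL d _ d0 Apos dA.
move=> hLA; exfalso; exact: (ar3 hLA (sumset_ge A b1B) hS).
Qed.

Lemma CD (L : nat)
  (hL : forall (d : G) k, d != 0 -> (0 < k)%N -> d *+ k = 0 -> (L < k)%N)
  (A B : {fset G}) : A != fset0 -> B != fset0 ->
  (#|` sumset A B| <= L)%N -> (#|`A| + #|`B| <= #|` sumset A B| + 1)%N.
Proof. by move=> nA nB; apply: (CD_ind hL (leqnn _)). Qed.
End CD.
Section Mat.
Variable G : choiceType.

Lemma basis_sub (M : matroid G) B : basis M B -> B `<=` ground M.
Proof. by case=> iB _; apply: indep_sub. Qed.

Lemma basis_card (M : matroid G) n B : has_rank M n -> basis M B -> #|`B| = n.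
Proof.
case=> B0 [[iB0 mB0] <-] [iB mB].
case: (ltngtP #|`B| #|`B0|) => // h.
- case: (indep_aug iB iB0 h) => x [/fsetDP[xB0 xB] ix].
  by case: (mB x) => //; apply: (fsubsetP (indep_sub iB0)).
- case: (indep_aug iB0 iB h) => x [/fsetDP[xB xB0] ix].
  by case: (mB0 x) => //; apply: (fsubsetP (indep_sub iB)).
Qed.

Lemma indep_card_basis (M : matroid G) n I :
  has_rank M n -> indep M I -> #|`I| = n -> basis M I.
Proof.
move=> hr iI cI; split => // x xg xI hi.
case: hr => B0 [[iB0 mB0] cB0].
have lt : (#|`B0| < #|` x |` I|)%N by rewrite cardfsU1 xI cB0 cI.
case: (indep_aug iB0 hi lt) => y [/fsetDP[yxI yB0] iy].
by case: (mB0 y) => //; apply: (fsubsetP (indep_sub hi)).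
Qed.

Lemma sp_exchange (N : matroid G) n : has_rank N n -> (0 < n)%N -> sparse_paving N ->
  forall I y z, I `<=` ground N -> #|`I| = n.-1 -> y \in ground N -> z \in ground N ->
  y != z -> y \notin I -> z \notin I -> indep N (y |` I) \/ indep N (z |` I).
Proof.
move=> hr n0 [pav dpav] I y z sI cI yg zg yz yI zI.
pose Y := y |` (z |` I).
have cY : #|` Y| = n.+1.
  rewrite /Y !cardfsU1 !inE negb_or yz yI zI cI /=; lia.
have sY : Y `<=` ground N.
  by rewrite /Y !fsubUset !fsub1set yg zg sI.
pose J := ground N `\` Y.
have cJ : #|` J| = (#|` ground N| - n).-1.
  by rewrite /J cardfsDS // cY subnS.
case: (dpav n hr J (fsubsetDl _ _) cJ) => _ [B [bB dJB]].
have iI := pav n hr I sI cI.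
case: (bB) => iB _.
have cB := basis_card hr bB.
have lt : (#|`I| < #|`B|)%N by rewrite cI cB; lia.
case: (indep_aug iI iB lt) => w [/fsetDP[wB wI] iw].
have wY : w \in Y.
  have wg : w \in ground N := fsubsetP (basis_sub bB) w wB.
  case: (boolP (w \in Y)) => // wnY.
  have wJ : w \in J by rewrite /J inE wnY wg.
  by move/fdisjointP: dJB => /(_ w wJ); rewrite wB.
move: wY; rewrite /Y !inE (negbTE wI) orbF => /orP[/eqP wy|/eqP wz].
  by left; rewrite -wy.
by right; rewrite -wz.
Qed.
End Mat.

Section Zp.
Variable G : zmodType.
Local Open Scope ring_scope.

Lemma zp_facts : cyclic_prime_order G -> exists p : nat,
  (forall (d : G) k, d != 0 -> (0 < k)%N -> d *+ k = 0 -> (p <= k)%N) /\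
  (forall E : {fset G}, 0 \notin E -> (#|` E| <= p.-1)%N).
Proof.
case=> p [g [pp [g0 [gp gen]]]].
have p0 : (0 < p)%N := prime_gt0 pp.
have ord : forall i, g *+ i = 0 -> (p %| i)%N.
  move=> i gi; case: (boolP (p %| i)%N) => // npi; exfalso.
  have cop : coprime p i by rewrite prime_coprime.
  case: (Bezoutl i p0) => a _; rewrite (eqP cop) => /dvdnP[q hq].
  move/eqP: g0; apply.
  have : g *+ (1 + a * i) = g *+ (q * p) by rewrite hq.
  by rewrite mulrnDr [(a * i)%N]mulnC mulrnA gi mul0rn addr0 mulr1n [(q * p)%N]mulnC mulrnA gp mul0rn.
exists p; split.
  move=> d k d0 k0 dk.
  case: (gen d) => j dj.
  have : (p %| j * k)%N by apply: ord; rewrite mulrnA -dj.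
  rewrite Euclid_dvdM // => /orP[/dvdnP[q hq]|pk]; last exact: dvdn_leq.
  by move: d0; rewrite dj hq mulnC mulrnA gp mul0rn eqxx.
move=> E E0.
have sE : E `<=` [fset g *+ i | i in iota 1 p.-1].
  apply/fsubsetP=> x xE; case: (gen x) => j xj.
  have xj' : x = g *+ (j %% p).
    by rewrite xj {1}(divn_eq j p) mulrnDr mulnC mulrnA gp mul0rn add0r.
  apply/imfsetP; exists (j %% p)%N => //=.
  rewrite mem_iota; apply/andP; split.
    rewrite lt0n; apply/eqP => h; have x0 : x = 0 by rewrite xj' h mulr0n.
    by move/negP: E0; apply; rewrite -x0.
  have := ltn_pmod j p0; lia.
apply: (leq_trans (fsubset_leq_card sE)).
apply: (leq_trans (leq_imfset_card _ _ _)).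
apply: (@leq_trans (size (iota 1 p.-1))); last by rewrite size_iota.
apply: uniq_leq_size; first exact: enum_finmem_uniq.
by move=> x; rewrite enum_finmemE.
Qed.
End Zp.
Unset Implicit Arguments.

Theorem corollary2p4 (G : zmodType) (M N : matroid G) (n : nat) :
  (torsion_free G \/ cyclic_prime_order G) ->
  loopless M -> loopless N ->
  has_rank M n -> has_rank N n -> (0 < n)%N ->
  sparse_paving N ->
  (#|` ground M| < #|` ground N| - 1)%N ->
  (0 : G) \notin ground N ->
  matched M N.
Proof.
move=> hG lM lN hrM hrN n0 spN hcard zN A bA.
have cA : #|`A| = n := basis_card hrM bA.
have sAK : A `<=` ground M := basis_sub bA.
have cAK : (n <= #|` ground M|)%N by rewrite -cA; apply: fsubset_leq_card.
have hL : forall (d : G) k, d != 0 -> (0 < k)%N -> d *+ k = 0 -> (#|` ground M| < k)%N.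
  case: hG => [tf | /zp_facts [p [hp hE]]] d k d0 k0 dk.
  - by move: d0; rewrite (tf d k k0 dk) eqxx.
  - have h1 := hp d k d0 k0 dk; have h2 := hE _ zN; move: hcard h1 h2; clear; lia.
pose S := fun a : G => [fset b in ground N | a + b \notin ground M].
have inS : forall a b, (b \in S a) = (b \in ground N) && (a + b \notin ground M).
  by move=> a b; rewrite !inE.
have nbE : forall X, nb S X `<=` ground N.
  move=> X; apply/fsubsetP=> y /nbP[x _]; by rewrite inS => /andP[].
have surplus : forall X, X `<=` A -> X != fset0 -> (#|`X| < #|` nb S X|)%N.
  move=> X sX nX.
  pose T := ground N `\` nb S X.
  have cT : #|`T| = (#|` ground N| - #|` nb S X|)%N := cardfsDS (nbE X).
  have cX : (#|`X| <= n)%N by rewrite -cA; apply: fsubset_leq_card.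
  have cnb : (#|` nb S X| <= #|` ground N|)%N := fsubset_leq_card (nbE X).
  case: (fset_0Vmem T) => [T0|[t tT]].
    have : (#|` ground N| <= #|` nb S X|)%N.
      apply: fsubset_leq_card; apply/fsubsetP => y yE.
      case: (boolP (y \in nb S X)) => // yn.
      have : y \in T by rewrite inE yn yE.
      by rewrite T0 inE.
    move: hcard cX cAK; clear; lia.
  have nT : T != fset0 by apply/fset0Pn; exists t.
  have sXT : sumset X T `<=` ground M.
    apply/fsubsetP=> z /sumsetP[x [y [xX yT ->]]].
    move: yT; rewrite inE => /andP[yn yE].
    case: (boolP (x + y \in ground M)) => // xyn.
    by exfalso; move/negP: yn; apply; apply/nbP; exists x => //; rewrite inS yE xyn.
  have cS : (#|` sumset X T| <= #|` ground M|)%N := fsubset_leq_card sXT.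
  have := CD hL nX nT cS.
  move: cS cT hcard cX cnb; clear; lia.
have hall1 : hallc S A.
  move=> X sX; case: (fset_0Vmem X) => [->|[x xX]]; first by rewrite cardfs0.
  by apply: ltnW; apply: surplus => //; apply/fset0Pn; exists x.
have [f [fi fS]] := hall 0 hall1.
have card_img : forall g : G -> G, {in A &, injective g} -> #|` g @` A| = n.
  by move=> g gi; rewrite card_in_imfset.
have match_of : forall g, sdr S A g -> indep N (g @` A) ->
    exists B, basis N B /\ bases_matched M A B.
  move=> g [gi gS] ig; exists (g @` A); split.
    by apply: (indep_card_basis hrN ig); apply: card_img.
  exists g; split => //; split.
    by move=> a aA; apply/imfsetP; exists a.
  by move=> a aA; have := gS a aA; rewrite inS => /andP[].
pose C := f @` A.
case: (classic (indep N C)) => iC; first exact: (match_of f).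
have [a1 a1A] : exists a1, a1 \in A.
  case: (fset_0Vmem A) => [A0|[a aA]]; last by exists a.
  by move: cA n0; rewrite A0 cardfs0 => <-.
pose c := f a1.
have cC : c \in C by apply/imfsetP; exists a1.
pose S' := fun a => S a `\ c.
have hall2 : hallc S' A.
  move=> X sX; case: (fset_0Vmem X) => [->|[x xX]]; first by rewrite cardfs0.
  have nX : X != fset0 by apply/fset0Pn; exists x.
  have e1 : nb S' X = nb S X `\ c.
    apply/fsetP=> z; apply/nbP/fsetD1P.
      by case=> y yX /fsetD1P[zc zS]; split => //; apply/nbP; exists y.
    by case=> zc /nbP[y yX zS]; exists y => //; apply/fsetD1P.
  rewrite e1.
  have h1 := surplus X sX nX.
  have h2 : #|` nb S X| = ((c \in nb S X) + #|` nb S X `\ c|)%N := cardfsD1 c (nb S X).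
  move: h1 h2; case: (c \in nb S X) => /=; clear; lia.
have sdrW : forall g, sdr S' A g -> sdr S A g.
  move=> g [gi gS]; split => // a aA; by have /fsetD1P[] := gS a aA.
have [g [[gi gS'] subC]] : exists g, sdr S' A g /\ C `\ c `<=` g @` A.
  suff: forall k g, sdr S' A g -> (#|` [fset a in A | g a != f a]| <= k)%N ->
       exists g', sdr S' A g' /\ C `\ c `<=` g' @` A.
    have [g0 h0] := hall 0 hall2.
    by move/(_ _ g0 h0 (leqnn _)).
  { elim=> [|k IH] g hg hk.
  all: case: (boolP (C `\ c `<=` g @` A)) => [sub|/fsubsetPn [x /fsetD1P[xc xC] xg]];
    first by exists g.
  all: case/imfsetP: xC => a /= aA xa.
  all: have gfa : g a != f a by apply/eqP => e; move/negP: xg; apply; apply/imfsetP; exists a => //; rewrite xa e.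
  all: have aD : a \in [fset y in A | g y != f y] by rewrite !inE aA gfa.
    have : (0 < #|` [fset y in A | g y != f y]|)%N.
      by rewrite cardfs_gt0; apply/fset0Pn; exists a.
    by move: hk; clear; lia.
  pose g2 := fun y => if y == a then f a else g y.
  apply: (IH g2).
    case: hg => gi gS; split.
      move=> y z yA zA; rewrite /g2; case: eqP => ya; case: eqP => za.
      - by rewrite ya za.
      - move=> e; exfalso; move/negP: xg; apply; apply/imfsetP; exists z; rewrite ?xa ?e //.
      - move=> e; exfalso; move/negP: xg; apply; apply/imfsetP; exists y; rewrite ?xa -?e //.
      - exact: gi.
    move=> y yA; rewrite /g2; case: eqP => ya; last exact: gS.
    by rewrite ya; apply/fsetD1P; split; [rewrite -xa | apply: fS].
  have sD : [fset y in A | g2 y != f y] `<=` [fset y in A | g y != f y] `\ a.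
    apply/fsubsetP=> y; rewrite !inE /g2; case: (eqVneq y a) => [->|ya].
      by rewrite !eqxx /= andbF.
    by move=> ->.
  have h1 : (#|` [fset y in A | g2 y != f y]| <= #|` [fset y in A | g y != f y] `\ a|)%N
    := fsubset_leq_card sD.
  have h2 : #|` [fset y in A | g y != f y]| = (1 + #|` [fset y in A | g y != f y] `\ a|)%N.
    by have := cardfsD1 a [fset y in A | g y != f y]; rewrite aD.
  exact: (ar1 h1 h2 hk). }
have cC' : #|` g @` A| = n := card_img g gi.
have cnC' : c \notin g @` A.
  apply/negP => /imfsetP[y /= yA cy]; have := gS' y yA; rewrite -cy.
  by rewrite !inE eqxx.
have cCc : #|` C `\ c| = n.-1.
  have := cardfsD1 c C; rewrite cC card_img // => ->; by [].
case: (boolP (g @` A `<=` C `\ c)) => [sub|/fsubsetPn [d dC' dn]].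
  have := fsubset_leq_card sub; rewrite cC' cCc; move: n0; clear; lia.
have dc : d != c by apply/eqP => e; move: cnC'; rewrite -e dC'.
have dE : d \in ground N.
  by case/imfsetP: dC' => y /= yA ->; have := gS' y yA; rewrite !inE => /andP[_ /andP[]].
have sI : C `\ c `<=` ground N.
  apply/fsubsetP=> y /fsetD1P[_ /imfsetP[z /= zA ->]].
  by have := fS z zA; rewrite inS => /andP[].
have cE : c \in ground N by have := fS a1 a1A; rewrite inS => /andP[].
have eC' : d |` (C `\ c) = g @` A.
  apply/eqP; rewrite eqEfcard fsubUset fsub1set dC' subC /= cC' cardfsU1 dn cCc.
  by move: n0; clear; lia.
have cI : c \notin C `\ c by rewrite !inE eqxx.
case: (sp_exchange hrN n0 spN sI cCc cE dE (ltac:(by rewrite eq_sym) : c != d) cI dn).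
  by move=> h; exfalso; apply: iC; rewrite -(fsetD1K cC).
by rewrite eC' => ig; apply: (match_of g) => //; apply: sdrW; split.
Qed.
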